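(* Let $d\ge2$ and let $H_1,H_2$ be half-spaces in $\mathbb{Z}^d$, i.e. $H_i=\{y\in\mathbb{Z}^d:\langle y,v_i\rangle\ge b_i\}$ for unit vectors $v_i\in\mathbb{R}^d$ (not necessarily coordinate directions) and $b_i\in\mathbb{R}$. For simple random walk $(X_t)$ let $T_i$ be the first hitting time of $H_i$. If $x\in\mathbb{Z}^d\setminus(H_1\cup H_2)$ and $h_i=b_i-\langle x,v_i\rangle>0$ denotes the Euclidean distance from $x$ to the hyperplane bounding $H_i$, then \[ \mathbb{P}_x(T_1>T_2)\le\frac52\,\frac{h_1+1}{h_2}\Big(1+\frac{1}{2h_2}\Big)^2. \]
   Context: $\mathbb{P}_x$ denotes the law of simple random walk on $\mathbb{Z}^d$ started at $x$. *)

(* Defs.v *)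
From Stdlib Require Import Reals Lra ZArith Arith List Bool.
Open Scope R_scope.

(* Points of Z^d are functions nat -> Z; only coordinates 0..d-1 matter.
   Vectors of R^d are functions nat -> R, coordinates 0..d-1. *)
Definition sumR (d : nat) (f : nat -> R) : R :=
  fold_right Rplus 0 (map f (seq 0 d)).

Definition inner (d : nat) (y : nat -> Z) (v : nat -> R) : R :=
  sumR d (fun i => IZR (y i) * v i).

Definition is_unit (d : nat) (v : nat -> R) : Prop :=
  sumR d (fun i => v i * v i) = 1.

Definition in_half (d : nat) (v : nat -> R) (b : R) (y : nat -> Z) : Prop :=
  b <= inner d y v.

Definition in_halfb (d : nat) (v : nat -> R) (b : R) (y : nat -> Z) : bool :=
  if Rle_dec b (inner d y v) then true else false.

Definition shift (y : nat -> Z) (i : nat) (s : Z) : nat -> Z :=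
  fun k => if Nat.eqb k i then (y k + s)%Z else y k.

(* first_hit2 d v1 b1 v2 b2 n y = P_y( T_2 = n and T_1 > T_2 ) for simple
   random walk on Z^d, where T_j is the first hitting time of H_j
   (T_j = 0 if the walk starts in H_j).  The event {T_2 = n < T_1} means the
   walk avoids H_1 u H_2 at times 0..n-1 and X_n lies in H_2 \ H_1. *)
Fixpoint first_hit2 (d : nat) (v1 : nat -> R) (b1 : R) (v2 : nat -> R) (b2 : R)
  (n : nat) (y : nat -> Z) : R :=
  match n with
  | O => if andb (in_halfb d v2 b2 y) (negb (in_halfb d v1 b1 y)) then 1 else 0
  | S m =>
      if orb (in_halfb d v1 b1 y) (in_halfb d v2 b2 y) then 0
      else / (2 * INR d) *
           sumR d (fun i => first_hit2 d v1 b1 v2 b2 m (shift y i 1%Z)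
                          + first_hit2 d v1 b1 v2 b2 m (shift y i (-1)%Z))
  end.

(* P_x(T_1 > T_2) = sum_n P_x(T_2 = n < T_1) is the limit of the partial sums *)
Definition prob_T1_gt_T2 (d : nat) (v1 : nat -> R) (b1 : R) (v2 : nat -> R)
  (b2 : R) (x : nat -> Z) (p : R) : Prop :=
  Un_cv (fun N => sum_f_R0 (fun n => first_hit2 d v1 b1 v2 b2 n x) N) p.

(* Main.v *)
Require Import Defs.
From Stdlib Require Import Reals ZArith Lra Lia List Bool.
Open Scope R_scope.

Lemma fold_plus_acc (l : list R) (c : R) : fold_right Rplus c l = fold_right Rplus 0 l + c.
Proof. induction l; simpl; [lra| rewrite IHl; lra]. Qed.

Lemma sumR_S n f : sumR (S n) f = sumR n f + f n.
Proof. unfold sumR. rewrite seq_S, map_app, fold_right_app. simpl. rewrite fold_plus_acc. lra. Qed.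

Lemma sumR_ext n f g : (forall i, (i<n)%nat -> f i = g i) -> sumR n f = sumR n g.
Proof. induction n; intros H; [reflexivity|]. rewrite !sumR_S, IHn, H; auto. Qed.

Lemma sumR_le n f g : (forall i, (i<n)%nat -> f i <= g i) -> sumR n f <= sumR n g.
Proof. induction n; intros H; [unfold sumR; simpl; lra|]. rewrite !sumR_S.
 assert (sumR n f <= sumR n g) by (apply IHn; auto). specialize (H n ltac:(lia)). lra. Qed.

Lemma sumR_plus n f g : sumR n (fun i => f i + g i) = sumR n f + sumR n g.
Proof. induction n; [unfold sumR; simpl; lra|]. rewrite !sumR_S, IHn. lra. Qed.

Lemma sumR_scal n c f : sumR n (fun i => c * f i) = c * sumR n f.
Proof. induction n; [unfold sumR; simpl; lra|]. rewrite !sumR_S, IHn. lra. Qed.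

Lemma sumR_const n c : sumR n (fun _ => c) = INR n * c.
Proof. induction n; [unfold sumR; simpl; lra|]. rewrite !sumR_S, IHn, S_INR. lra. Qed.

Lemma sumR_nonneg n f : (forall i, (i<n)%nat -> 0 <= f i) -> 0 <= sumR n f.
Proof. induction n; intros H; [unfold sumR; simpl; lra|]. rewrite sumR_S.
 assert (0 <= sumR n f) by (apply IHn; auto). specialize (H n ltac:(lia)). lra. Qed.

Lemma sumR_term n f i : (forall k, (k<n)%nat -> 0 <= f k) -> (i < n)%nat -> f i <= sumR n f.
Proof. induction n; intros H Hi; [lia|]. rewrite sumR_S.
 destruct (Nat.eq_dec i n).
 - subst. assert (0 <= sumR n f) by (apply sumR_nonneg; auto). lra.
 - assert (f i <= sumR n f) by (apply IHn; auto; lia). specialize (H n ltac:(lia)). lra. Qed.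

Lemma inner_shift (d : nat) (y : nat -> Z) (v : nat -> R) (i : nat) (s : Z) : (i < d)%nat -> inner d (Defs.shift y i s) v = inner d y v + IZR s * v i.
Proof.
 unfold inner. induction d; intros Hi; [lia|]. rewrite !sumR_S.
 destruct (Nat.eq_dec i d).
 - subst. rewrite (sumR_ext d (fun i0 => IZR (Defs.shift y d s i0) * v i0) (fun i0 => IZR (y i0) * v i0)).
   + unfold Defs.shift. rewrite Nat.eqb_refl, plus_IZR. ring.
   + intros k Hk. unfold Defs.shift. replace (Nat.eqb k d) with false; auto. symmetry; apply Nat.eqb_neq; lia.
 - rewrite IHd by lia. unfold Defs.shift at 1. replace (Nat.eqb d i) with false. ring.
   symmetry; apply Nat.eqb_neq; lia.
Qed.

Lemma key (a b P s : R) : a*a <= 1 -> b*b <= 1 -> 5/2 < s -> 1 <= (s - 2*P)*s ->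
  (P - a)/(s - (a+b)) + (P+a)/(s+(a+b)) <= 2*P/s + (b*b - a*a)/(s*s).
Proof.
 intros Ha Hb Hs H.
 assert (Hsig : (a+b)*(a+b) <= 4) by nra.
 assert (Hm : 0 < s - (a+b)) by nra.
 assert (Hp : 0 < s + (a+b)) by nra.
 assert (E : (P - a)/(s - (a+b)) + (P+a)/(s+(a+b)) - (2*P/s + (b*b - a*a)/(s*s))
   = ((a+b)*(a+b) / (s*((s - (a+b))*(s+(a+b))))) * ((2*P - s) + (b*b - a*a)/s)).
 { field. repeat split; lra. }
 assert (0 <= (a+b)*(a+b) / (s*((s - (a+b))*(s+(a+b))))).
 { unfold Rdiv; apply Rmult_le_pos; [pose proof (Rle_0_sqr (a+b)) as Hq; unfold Rsqr in Hq; lra| left; apply Rinv_0_lt_compat; apply Rmult_lt_0_compat; [lra| nra]]. }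
 assert ((2*P - s) + (b*b - a*a)/s <= 0).
 { assert ((b*b-a*a)/s <= 1/s). { apply Rmult_le_compat_r. left; apply Rinv_0_lt_compat; lra. nra. }
   assert (1/s <= s - 2*P). { apply (Rmult_le_reg_r s); [lra|]. field_simplify; lra. }
   lra. }
 assert (((a+b)*(a+b) / (s*((s - (a+b))*(s+(a+b))))) * ((2*P - s) + (b*b - a*a)/s) <= 0).
 { set (X := (a+b)*(a+b) / (s*((s - (a+b))*(s+(a+b))))) in *. set (Y := (2*P - s) + (b*b - a*a)/s) in *. assert (0 <= X * (- Y)) by (apply Rmult_le_pos; lra). lra. }
 lra.
Qed.

Definition sF d (v1 : nat -> R) b1 (v2 : nat -> R) b2 (y : nat -> Z) :=
  (b1 - inner d y v1) + 1 + (b2 - inner d y v2).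
Definition uF d v1 b1 v2 b2 y :=
  if Rle_dec (sF d v1 b1 v2 b2 y) (1/2) then 1
  else Rmin 1 (5/2 * (b1 - inner d y v1 + 1) / sF d v1 b1 v2 b2 y).

Lemma u_le1 d v1 b1 v2 b2 y : uF d v1 b1 v2 b2 y <= 1.
Proof. unfold uF; destruct Rle_dec; [lra| apply Rmin_l]. Qed.

Lemma u_nonneg d v1 b1 v2 b2 y : -1 < b1 - inner d y v1 -> -1 < b2 - inner d y v2 ->
  0 <= uF d v1 b1 v2 b2 y.
Proof. intros H1 H2. unfold uF; destruct Rle_dec as [H|H]; [lra|].
 unfold sF in *. apply Rmin_case; [lra|]. unfold Rdiv. apply Rmult_le_pos; [lra|].
 left; apply Rinv_0_lt_compat; lra. Qed.

Lemma u_one d v1 b1 v2 b2 y : 0 < b1 - inner d y v1 -> b2 - inner d y v2 <= 0 ->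
  uF d v1 b1 v2 b2 y = 1.
Proof. intros H1 H2. unfold uF; destruct Rle_dec as [H|H]; [lra|].
 unfold sF in *. apply Rmin_left. apply (Rmult_le_reg_r (b1 - inner d y v1 + 1 + (b2 - inner d y v2))); [lra|].
 field_simplify; lra. Qed.

Lemma u_le_F d v1 b1 v2 b2 y : 1/2 < sF d v1 b1 v2 b2 y ->
  uF d v1 b1 v2 b2 y <= 5/2 * (b1 - inner d y v1 + 1) / sF d v1 b1 v2 b2 y.
Proof. intros H. unfold uF; destruct Rle_dec; [lra| apply Rmin_r]. Qed.

Lemma superharm d v1 b1 v2 b2 y : (2 <= d)%nat -> is_unit d v1 -> is_unit d v2 ->
  0 < b1 - inner d y v1 -> 0 < b2 - inner d y v2 ->
  / (2 * INR d) * sumR d (fun i => uF d v1 b1 v2 b2 (Defs.shift y i 1%Z)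
      + uF d v1 b1 v2 b2 (Defs.shift y i (-1)%Z)) <= uF d v1 b1 v2 b2 y.
Proof.
 intros Hd U1 U2 H1 H2.
 assert (Hd' : 0 < INR d) by (apply lt_0_INR; lia).
 assert (Htriv : / (2 * INR d) * sumR d (fun i => uF d v1 b1 v2 b2 (Defs.shift y i 1%Z)
      + uF d v1 b1 v2 b2 (Defs.shift y i (-1)%Z)) <= 1).
 { apply Rle_trans with (/ (2 * INR d) * sumR d (fun _ => 2)).
   - apply Rmult_le_compat_l. left; apply Rinv_0_lt_compat; lra.
     apply sumR_le. intros i _. pose proof (u_le1 d v1 b1 v2 b2 (Defs.shift y i 1%Z)).
     pose proof (u_le1 d v1 b1 v2 b2 (Defs.shift y i (-1)%Z)). lra.
   - rewrite sumR_const. right. field. lra. }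
 set (s := sF d v1 b1 v2 b2 y).
 set (P := b1 - inner d y v1 + 1).
 assert (E : uF d v1 b1 v2 b2 y = 1 \/ (uF d v1 b1 v2 b2 y = 5/2 * P / s /\ 1/2 < s /\ 5/2*P/s < 1)).
 { unfold uF. fold s. fold P. destruct Rle_dec; [left; reflexivity|].
   unfold Rmin. destruct Rle_dec; [left; reflexivity| right; lra]. }
 destruct E as [E|[E [Hs HF]]]; [rewrite E; exact Htriv|].
 rewrite E.
 assert (Hs0 : 0 < s) by lra.
 assert (HP : 5/2 * P < s).
 { apply (Rmult_lt_compat_r s) in HF; [|lra]. field_simplify in HF; lra. }
 assert (HP1 : 1 < P) by (unfold P; lra).
 assert (Hs2 : 5/2 < s) by lra.
 assert (Hkey : 1 <= (s - 2*P)*s) by nra.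
 apply Rle_trans with (/ (2 * INR d) * sumR d (fun i =>
   5/2 * (2 * P / s) + (5/2 / (s*s)) * (v2 i * v2 i) + (- (5/2) / (s*s)) * (v1 i * v1 i))).
 - apply Rmult_le_compat_l. left; apply Rinv_0_lt_compat; lra.
   apply sumR_le. intros i Hi.
   set (a := v1 i). set (b := v2 i).
   assert (Ha : a * a <= 1).
   { unfold is_unit in U1. rewrite <- U1. apply (sumR_term d (fun i => v1 i * v1 i)); auto.
     intros; nra. }
   assert (Hb : b * b <= 1).
   { unfold is_unit in U2. rewrite <- U2. apply (sumR_term d (fun i => v2 i * v2 i)); auto.
     intros; nra. }
   assert (Es1 : sF d v1 b1 v2 b2 (Defs.shift y i 1%Z) = s - (a+b)).
   { unfold s, sF. rewrite !inner_shift by lia. fold a b. simpl IZR. lra. }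
   assert (Es2 : sF d v1 b1 v2 b2 (Defs.shift y i (-1)%Z) = s + (a+b)).
   { unfold s, sF. rewrite !inner_shift by lia. fold a b. simpl IZR. lra. }
   assert (Ep1 : b1 - inner d (Defs.shift y i 1%Z) v1 + 1 = P - a).
   { unfold P. rewrite !inner_shift by lia. fold a. simpl IZR. lra. }
   assert (Ep2 : b1 - inner d (Defs.shift y i (-1)%Z) v1 + 1 = P + a).
   { unfold P. rewrite !inner_shift by lia. fold a. simpl IZR. lra. }
   assert (Hab : (a+b)*(a+b) <= 4) by nra.
   assert (HU1 := u_le_F d v1 b1 v2 b2 (Defs.shift y i 1%Z)).
   assert (HU2 := u_le_F d v1 b1 v2 b2 (Defs.shift y i (-1)%Z)).
   rewrite Es1, Ep1 in HU1. rewrite Es2, Ep2 in HU2.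
   assert (Hk := key a b P s Ha Hb Hs2 Hkey).
   assert (1/2 < s - (a+b)) by nra. assert (1/2 < s + (a+b)) by nra.
   specialize (HU1 ltac:(lra)). specialize (HU2 ltac:(lra)).
   assert (R1 : 5/2 * (P-a)/(s-(a+b)) + 5/2*(P+a)/(s+(a+b)) = 5/2 * ((P - a)/(s - (a+b)) + (P+a)/(s+(a+b)))) by (field; lra).
   assert (R2 : 5/2 * (2 * P / s) + (5/2 / (s*s)) * (b * b) + (- (5/2) / (s*s)) * (a * a) = 5/2 * (2*P/s + (b*b - a*a)/(s*s))) by (field; lra).
   rewrite R2. lra.
 - rewrite !sumR_plus, !sumR_scal, sumR_const.
   unfold is_unit in U1, U2. rewrite U1, U2. right. field. lra.
Qed.

Lemma halfb_true d v b y : in_halfb d v b y = true <-> b <= inner d y v.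
Proof. unfold in_halfb; destruct Rle_dec; split; intros; auto; discriminate || contradiction. Qed.
Lemma halfb_false d v b y : in_halfb d v b y = false <-> ~ b <= inner d y v.
Proof. unfold in_halfb; destruct Rle_dec; split; intros; auto; try discriminate; contradiction. Qed.

Lemma fh_nonneg d v1 b1 v2 b2 : (0 < INR d) -> forall n y, 0 <= first_hit2 d v1 b1 v2 b2 n y.
Proof. intros Hd n. induction n; intros y; simpl.
 - destruct (_ && _); lra.
 - destruct (_ || _); [lra|]. apply Rmult_le_pos. left; apply Rinv_0_lt_compat; lra.
   apply sumR_nonneg. intros i _. pose proof (IHn (Defs.shift y i 1%Z)). pose proof (IHn (Defs.shift y i (-1)%Z)). lra.
Qed.

Lemma sum_shift (f : nat -> R) N : sum_f_R0 f (S N) = f 0%nat + sum_f_R0 (fun n => f (S n)) N.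
Proof. induction N; simpl; [lra|]. simpl in IHN. rewrite IHN. lra. Qed.

Lemma exch n (g h : nat -> nat -> R) N :
  sum_f_R0 (fun k => sumR n (fun i => g k i + h k i)) N =
  sumR n (fun i => sum_f_R0 (fun k => g k i) N + sum_f_R0 (fun k => h k i) N).
Proof. induction N; simpl; [reflexivity|]. rewrite IHN, <- sumR_plus. apply sumR_ext. intros; lra. Qed.

Lemma sum_boundary d v1 b1 v2 b2 y N :
  orb (in_halfb d v1 b1 y) (in_halfb d v2 b2 y) = true ->
  sum_f_R0 (fun n => first_hit2 d v1 b1 v2 b2 n y) N = first_hit2 d v1 b1 v2 b2 0 y.
Proof. intros H. induction N; simpl; [reflexivity|]. simpl in IHN. rewrite IHN, H. lra. Qed.

Lemma main_bound d v1 b1 v2 b2 : (2 <= d)%nat -> is_unit d v1 -> is_unit d v2 ->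
  forall N y, -1 < b1 - inner d y v1 -> -1 < b2 - inner d y v2 ->
  sum_f_R0 (fun n => first_hit2 d v1 b1 v2 b2 n y) N <= uF d v1 b1 v2 b2 y.
Proof.
 intros Hd U1 U2. assert (Hd' : 0 < INR d) by (apply lt_0_INR; lia).
 assert (Hc : forall i, (i < d)%nat -> v1 i * v1 i <= 1 /\ v2 i * v2 i <= 1).
 { intros i Hi. split.
   - unfold is_unit in U1. rewrite <- U1. apply (sumR_term d (fun i => v1 i * v1 i)); auto. intros; nra.
   - unfold is_unit in U2. rewrite <- U2. apply (sumR_term d (fun i => v2 i * v2 i)); auto. intros; nra. }
 induction N; intros y Hy1 Hy2.
 - simpl. case_eq (in_halfb d v1 b1 y); intro E1; case_eq (in_halfb d v2 b2 y); intro E2; simpl.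
   + apply u_nonneg; auto.
   + apply u_nonneg; auto.
   + apply halfb_false in E1. apply halfb_true in E2. rewrite u_one; lra.
   + apply u_nonneg; auto.
 - case_eq (orb (in_halfb d v1 b1 y) (in_halfb d v2 b2 y)); intro E.
   + rewrite sum_boundary by auto. simpl first_hit2.
     case_eq (in_halfb d v1 b1 y); intro E1; case_eq (in_halfb d v2 b2 y); intro E2; simpl.
     * apply u_nonneg; auto.
     * apply u_nonneg; auto.
     * apply halfb_false in E1. apply halfb_true in E2. rewrite u_one; lra.
     * apply u_nonneg; auto.
   + apply orb_false_iff in E. destruct E as [E1 E2].
     rewrite sum_shift. simpl first_hit2 at 1. rewrite E1, E2. simpl andb.
     assert (Hin1 := E1). assert (Hin2 := E2).
     apply halfb_false in Hin1. apply halfb_false in Hin2.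
     replace (sum_f_R0 (fun n => first_hit2 d v1 b1 v2 b2 (S n) y) N)
       with (/ (2 * INR d) * sum_f_R0 (fun k => sumR d (fun i =>
          first_hit2 d v1 b1 v2 b2 k (Defs.shift y i 1%Z) + first_hit2 d v1 b1 v2 b2 k (Defs.shift y i (-1)%Z))) N).
     2:{ rewrite scal_sum. apply sum_eq. intros k _. simpl. rewrite E1, E2. simpl. lra. }
     rewrite exch.
     apply Rle_trans with (/ (2 * INR d) * sumR d (fun i => uF d v1 b1 v2 b2 (Defs.shift y i 1%Z)
      + uF d v1 b1 v2 b2 (Defs.shift y i (-1)%Z))).
     * assert (/ (2 * INR d) * sumR d (fun i => sum_f_R0 (fun k => first_hit2 d v1 b1 v2 b2 k (Defs.shift y i 1%Z)) N +
          sum_f_R0 (fun k => first_hit2 d v1 b1 v2 b2 k (Defs.shift y i (-1)%Z)) N) <= / (2 * INR d) * sumR d (fun i => uF d v1 b1 v2 b2 (Defs.shift y i 1%Z)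
      + uF d v1 b1 v2 b2 (Defs.shift y i (-1)%Z))); [|lra].
       apply Rmult_le_compat_l. left; apply Rinv_0_lt_compat; lra.
       apply sumR_le. intros i Hi. destruct (Hc i Hi) as [Ha Hb].
       assert (Ha' : -1 <= v1 i <= 1) by nra. assert (Hb' : -1 <= v2 i <= 1) by nra.
       apply Rplus_le_compat; apply IHN; rewrite inner_shift by lia; simpl IZR; lra.
     * apply superharm; auto; lra.
Qed.

Theorem lemma5p4 (d : nat) (v1 v2 : nat -> R) (b1 b2 : R) (x : nat -> Z) :
  (2 <= d)%nat ->
  is_unit d v1 -> is_unit d v2 ->
  ~ in_half d v1 b1 x -> ~ in_half d v2 b2 x ->
  let h1 := b1 - inner d x v1 in
  let h2 := b2 - inner d x v2 in
  exists p, prob_T1_gt_T2 d v1 b1 v2 b2 x p /\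
    p <= 5 / 2 * ((h1 + 1) / h2) * (1 + 1 / (2 * h2)) ^ 2.
Proof.
  intros Hd U1 U2 Hx1 Hx2 h1 h2.
  unfold in_half in Hx1, Hx2.
  assert (H1 : 0 < h1) by (unfold h1; lra).
  assert (H2 : 0 < h2) by (unfold h2; lra).
  assert (Hd' : 0 < INR d) by (apply lt_0_INR; lia).
  set (Un := fun N => sum_f_R0 (fun n => first_hit2 d v1 b1 v2 b2 n x) N).
  assert (Hb : forall N, Un N <= uF d v1 b1 v2 b2 x).
  { intro N. unfold Un. apply main_bound; auto; fold h1 h2; lra. }
  assert (Hg : Un_growing Un).
  { intro n. unfold Un. rewrite tech5. pose proof (fh_nonneg d v1 b1 v2 b2 Hd' (S n) x). lra. }
  assert (Hub : has_ub Un).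
  { exists (uF d v1 b1 v2 b2 x). intros z [i ->]. apply Hb. }
  destruct (growing_cv Un Hg Hub) as [l Hl].
  exists l. split; [exact Hl|].
  assert (Hl2 : l <= uF d v1 b1 v2 b2 x).
  { apply (Rle_cv_lim (Un := Un) (Vn := fun _ => uF d v1 b1 v2 b2 x)); auto.
    intros eps Heps. exists 0%nat. intros n _. unfold Rdist. rewrite Rminus_diag, Rabs_R0. lra. }
  assert (Hs : sF d v1 b1 v2 b2 x = h1 + 1 + h2) by (unfold sF, h1, h2; ring).
  assert (HF := u_le_F d v1 b1 v2 b2 x). rewrite Hs in HF. fold h1 in HF.
  specialize (HF ltac:(lra)).
  assert (A1 : 5/2 * (h1+1) / (h1 + 1 + h2) <= 5/2 * ((h1+1)/h2)).
  { unfold Rdiv. rewrite Rmult_assoc. apply Rmult_le_compat_l; [lra|].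
    apply Rmult_le_compat_l; [lra|]. apply Rinv_le_contravar; lra. }
  assert (A2 : 0 <= 5/2 * ((h1+1)/h2)).
  { apply Rmult_le_pos; [lra|]. unfold Rdiv; apply Rmult_le_pos; [lra| left; apply Rinv_0_lt_compat; lra]. }
  assert (A3 : 1 <= (1 + 1 / (2 * h2)) ^ 2).
  { assert (0 <= 1/(2*h2)) by (unfold Rdiv; apply Rmult_le_pos; [lra| left; apply Rinv_0_lt_compat; lra]).
    simpl. nra. }
  assert (5/2 * ((h1+1)/h2) * 1 <= 5/2 * ((h1+1)/h2) * (1 + 1 / (2 * h2)) ^ 2)
    by (apply Rmult_le_compat_l; auto).
  lra.
Qed.
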